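(* Let $d\geq 3$. Let $\mathcal{H}_A=\mathbb{C}^2\otimes\mathbb{C}^d$ and $\mathcal{H}_B=\mathbb{C}^2\otimes\mathbb{C}^d$, and regard $\mathcal{H}_A\otimes\mathcal{H}_B$ as $(\mathbb{C}^2\otimes\mathbb{C}^2)\otimes(\mathbb{C}^d\otimes\mathbb{C}^d)$, where the first pair consists of the qubit factors of Alice and Bob and the second pair of the qudit factors. For $x,y,z\geq 0$ let $$\rho=\tilde Q_2\otimes\tilde Q+x\,P_2\otimes\tilde Q+y\,\tilde Q_2\otimes P+z\,P_2\otimes P.$$ If $z>\frac{2x}{d-2}$, then $\rho$ is entangled (not separable) with respect to the split $\mathcal{H}_A|\mathcal{H}_B$.
   Context: $P_2=|\Phi_2\rangle\langle\Phi_2|$ with $|\Phi_2\rangle=\frac{1}{\sqrt2}(|00\rangle+|11\rangle)\in\mathbb{C}^2\otimes\mathbb{C}^2$, and $\tilde Q_2=(\mathbb{1}-P_2)/3$. $P=|\Phi_d\rangle\langle\Phi_d|$ with $|\Phi_d\rangle=\frac{1}{\sqrt d}\sum_{i=0}^{d-1}|ii\rangle\in\mathbb{C}^d\otimes\mathbb{C}^d$, and $\tilde Q=(\mathbb{1}-P)/(d^2-1)$. A positive semidefinite operator is separable if it is a nonnegative combination of product operators $\rho^A\otimes\rho^B$ with $\rho^A,\rho^B\geq 0$. *)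

(* Defs.v *)
(* Complex scalars: an arbitrary numClosedFieldType C
   (e.g. algC, or R[i] for a real closed field R), with Num.conj as complex
   conjugation and the partial order 0 <= z <-> z real nonnegative. *)
From HB Require Import structures.
From mathcomp Require Import all_boot all_order all_algebra.
Unset Printing Implicit Defensive.
Import Order.TTheory GRing.Theory Num.Theory.
Local Open Scope ring_scope.

Definition op (C : numClosedFieldType) (I : finType) := I -> I -> C.

Definition psd (C : numClosedFieldType) (I : finType) (M : op C I) : Prop :=
  forall v : I -> C, 0 <= \sum_(i : I) \sum_(j : I) (v i)^* * M i j * v j.

Definition kron (C : numClosedFieldType) (I J : finType) (M : op C I) (N : op C J)
  : op C (I * J)%type := fun p q => M p.1 q.1 * N p.2 q.2.

Definition separable (C : numClosedFieldType) (I J : finType) (M : op C (I * J)%type)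
  : Prop :=
  exists (n : nat) (c : 'I_n -> C) (A : 'I_n -> op C I) (B : 'I_n -> op C J),
    (forall k, 0 <= c k /\ psd C I (A k) /\ psd C J (B k)) /\
    (forall p q, M p q = \sum_(k < n) c k * kron _ _ _ (A k) (B k) p q).

Definition idop (C : numClosedFieldType) (I : finType) : op C I :=
  fun i j => (i == j)%:R.

(* projector onto the maximally entangled state (1/sqrt n) sum_i |ii> on C^n (x) C^n *)
Definition Pmax (C : numClosedFieldType) (n : nat) : op C ('I_n * 'I_n)%type :=
  fun p q => (p.1 == p.2)%:R * (q.1 == q.2)%:R / n%:R.

Definition Qtil (C : numClosedFieldType) (n : nat) : op C ('I_n * 'I_n)%type :=
  fun p q => (@idop C _ p q - Pmax C n p q) / (n%:R ^+ 2 - 1).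

(* rho on (C^2 (x) C^2) (x) (C^d (x) C^d) (qubits of A,B ; qudits of A,B) *)
Definition rho_qq (C : numClosedFieldType) (d : nat) (x y z : C)
  : op C (('I_2 * 'I_2) * ('I_d * 'I_d))%type :=
  fun p q =>
    kron _ _ _ (Qtil C 2) (Qtil C d) p q + x * kron _ _ _ (Pmax C 2) (Qtil C d) p q
    + y * kron _ _ _ (Qtil C 2) (Pmax C d) p q + z * kron _ _ _ (Pmax C 2) (Pmax C d) p q.

(* the same operator, reordered to H_A (x) H_B with H_A = H_B = C^2 (x) C^d *)
Definition rho_AB (C : numClosedFieldType) (d : nat) (x y z : C)
  : op C (('I_2 * 'I_d) * ('I_2 * 'I_d))%type :=
  fun p q => rho_qq C d x y z ((p.1.1, p.2.1), (p.1.2, p.2.2))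
                           ((q.1.1, q.2.1), (q.1.2, q.2.2)).

(* Main.v *)
Require Import Defs.
From HB Require Import structures.
From mathcomp Require Import all_boot all_order all_algebra.
From mathcomp Require Import ring.
Import Order.TTheory GRing.Theory Num.Theory.
Local Open Scope ring_scope.
Local Open Scope sesquilinear_scope.


Lemma sum_delta_r (C : numClosedFieldType) (I : finType) (F : I -> C) p :
  \sum_j F j * (j == p)%:R = F p.
Proof.
rewrite (bigD1 p) //= eqxx mulr1 big1 ?addr0 // => j /negbTE ->; by rewrite mulr0.
Qed.

Lemma form2 (C : numClosedFieldType) (I : finType) (A : op C I) p q a b :
  \sum_i \sum_j ((a * (i == p)%:R + b * (i == q)%:R)^* * A i j *
     (a * (j == p)%:R + b * (j == q)%:R)) =
  a^* * a * A p p + a^* * b * A p q + b^* * a * A q p + b^* * b * A q q.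
Proof.
have E : forall i, (a * (i == p)%:R + b * (i == q)%:R)^* =
   a^* * (i == p)%:R + b^* * (i == q)%:R.
  by move=> i; rewrite rmorphD !rmorphM /= !rmorph_nat.
transitivity (\sum_i ((a^* * (A i p * a) + a^* * (A i q * b)) * (i == p)%:R
                     + (b^* * (A i p * a) + b^* * (A i q * b)) * (i == q)%:R)).
  apply: eq_bigr => i _.
  under eq_bigr => j _ do rewrite E.
  have H : forall j, (a^* * (i == p)%:R + b^* * (i == q)%:R) * A i j *
    (a * (j == p)%:R + b * (j == q)%:R) =
    ((a^* * (i == p)%:R + b^* * (i == q)%:R) * A i j * a) * (j == p)%:R +
    ((a^* * (i == p)%:R + b^* * (i == q)%:R) * A i j * b) * (j == q)%:R.
    move=> j; clear E. ring.
  under eq_bigr => j _ do rewrite H.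
  rewrite big_split /= !sum_delta_r; ring.
rewrite big_split /= !sum_delta_r; ring.
Qed.

Lemma psd_herm (C : numClosedFieldType) (I : finType) (A : op C I) :
  psd C I A -> forall p q, A q p = (A p q)^*.
Proof.
move=> HA p q.
have R : forall a b : C, let F := a^* * a * A p p + a^* * b * A p q + b^* * a * A q p + b^* * b * A q q in F^* = F.
  move=> a b F; rewrite /F -form2; apply: conj_Creal; apply: ger0_real.
  exact: (HA (fun i => a * (i == p)%:R + b * (i == q)%:R)).
have R1 := R 1 0; have R2 := R 0 1; have R3 := R 1 1; have R4 := R 1 'i.
rewrite /= !(rmorph0, rmorph1, mul0r, mulr0, mul1r, mulr1, add0r, addr0) in R1 R2 R3 R4.
rewrite conjCi !mulNr -expr2 sqrCi mulN1r opprK in R4.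
set s := A p q in R3 R4 *; set t := A q p in R3 R4 *.
set P := A p p in R1 R3 R4; set Q := A q q in R2 R3 R4.
have E2 : s^* + t^* = s + t.
  move: R3; rewrite !rmorphD /= R1 R2 => /eqP; rewrite -!addrA => /eqP /addrI.
  by rewrite !addrA => /addIr.
have E3 : 'i * (s - t) = 'i * (t^* - s^*).
  move: R4; rewrite !rmorphD !rmorphM /= R1 R2 ?rmorphN /= ?conjCi ?opprK => /eqP.
  rewrite -!addrA => /eqP /addrI; rewrite !addrA => /addIr.
  move=> E; rewrite rmorphM /= conjCi in E; rewrite mulrBr mulrBr -E; ring.
move/mulfI: E3 => E3; have {E3} E3 := E3 (neq0Ci C).
have E4 : 2 * t^* = 2 * s.
  by transitivity ((s^* + t^*) + (t^* - s^*)); [ring | rewrite E2 -E3; ring].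
have n2 : (2 : C) != 0 by rewrite pnatr_eq0.
move/mulfI: E4 => /(_ n2) E4.
by rewrite -E4 conjCK.
Qed.

Lemma sum_enum (C : numClosedFieldType) (I : finType) (F : I -> C) :
  \sum_(p : I) F p = \sum_(i < #|I|) F (enum_val i).
Proof.
rewrite (reindex (fun i : 'I_#|I| => enum_val i)) //=.
by exists enum_rank => ? _; [exact: enum_valK | exact: enum_rankK].
Qed.

Lemma psd_decomp (C : numClosedFieldType) (I : finType) (A : op C I) :
  psd C I A -> exists n (u : 'I_n -> I -> C),
    forall p q, A p q = \sum_(k < n) u k p * (u k q)^*.
Proof.
move=> HA.
pose M : 'M[C]_#|I| := \matrix_(i, j) A (enum_val i) (enum_val j).
have Mh : M \is hermsymmx.
  apply/is_hermitianmxP; rewrite expr0 scale1r; apply/matrixP => i j.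
  by rewrite !mxE (@psd_herm _ _ _ HA).
set P := spectralmx M; set D := spectral_diag M.
have EM : M = P^t* *m diag_mx D *m P.
  have := orthomx_spectralP (hermitian_normalmx Mh).
  by rewrite invmx_unitary ?spectral_unitarymx.
have PU : P *m P^t* = 1%:M by apply/unitarymxP; exact: spectral_unitarymx.
have psdM : forall w : 'I_#|I| -> C, 0 <= \sum_i \sum_j (w i)^* * M i j * w j.
  move=> w; have := HA (fun p => w (enum_rank p)).
  rewrite sum_enum; under eq_bigr => i _ do rewrite sum_enum.
  under eq_bigr => i _ do under eq_bigr => j _ do rewrite !enum_valK.
  by under [X in _ -> 0 <= X]eq_bigr => i _ do under eq_bigr => j _ do rewrite mxE.
have Dge0 : forall k, 0 <= D 0 k.
  move=> k.
  have -> : D 0 k = (P *m M *m P^t*) k k.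
    by rewrite EM !mulmxA PU mul1mx -mulmxA PU mulmx1 mxE eqxx /= mulr1n.
  have := psdM (fun j => (P k j)^*).
  under eq_bigr => i _ do under eq_bigr => j _ do rewrite conjCK.
  move=> H; apply: le_trans H _; rewrite le_eqVlt; apply/orP; left; apply/eqP.
  rewrite mxE; under [RHS]eq_bigr => j _ do rewrite !mxE mulr_suml.
  rewrite exchange_big /=; apply: eq_bigr => i _; apply: eq_bigr => j _.
  by rewrite mxE.
pose u k p := sqrtC (D 0 k) * (P k (enum_rank p))^*.
exists #|I|, u => p q.
have -> : A p q = M (enum_rank p) (enum_rank q) by rewrite mxE !enum_rankK.
rewrite EM mxE; apply: eq_bigr => k _; rewrite mul_mx_diag !mxE /u.
have hs : (sqrtC (D 0 k))^* = sqrtC (D 0 k) by rewrite geC0_conj ?sqrtC_ge0.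
rewrite rmorphM /= conjCK hs.
have := sqrtCK (D 0 k); rewrite expr2.
set sD := sqrtC (D 0 k) => <-; ring.
Qed.
Definition nsq {C : numClosedFieldType} (z : C) := z * z^*.

Lemma nsq_ge0 {C : numClosedFieldType} (z : C) : 0 <= nsq z.
Proof. exact: mul_conjC_ge0. Qed.

Lemma sum_prod {C : numClosedFieldType} {n : nat} (f g : 'I_n -> C) :
  \sum_i \sum_j f i * g j = (\sum_i f i) * (\sum_j g j).
Proof. rewrite mulr_suml; apply: eq_bigr => i _; by rewrite mulr_sumr. Qed.

Lemma sum2D {C : numClosedFieldType} {n : nat} (F G : 'I_n -> 'I_n -> C) :
  \sum_i \sum_j (F i j + G i j) = \sum_i \sum_j F i j + \sum_i \sum_j G i j.
Proof. rewrite -big_split; apply: eq_bigr => i _; exact: big_split. Qed.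

Lemma sum2B {C : numClosedFieldType} {n : nat} (F G : 'I_n -> 'I_n -> C) :
  \sum_i \sum_j (F i j - G i j) = \sum_i \sum_j F i j - \sum_i \sum_j G i j.
Proof. rewrite -sumrB; apply: eq_bigr => i _; exact: sumrB. Qed.

Lemma sum_prod' {C : numClosedFieldType} {n : nat} (f g : 'I_n -> C) :
  \sum_i \sum_j f j * g i = (\sum_i f i) * (\sum_j g j).
Proof. by rewrite exchange_big /= sum_prod. Qed.

Lemma CS {C : numClosedFieldType} {n : nat} (a c : 'I_n -> C) :
  nsq (\sum_i a i * (c i)^*) <= (\sum_i a i * (a i)^*) * (\sum_i c i * (c i)^*).
Proof.
have E : 2 * ((\sum_i a i * (a i)^*) * (\sum_i c i * (c i)^*) - nsq (\sum_i a i * (c i)^*))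
   = \sum_i \sum_j nsq (a i * c j - a j * c i).
  have T : forall i j, nsq (a i * c j - a j * c i) =
     (a i * (a i)^*) * (c j * (c j)^*) + (a j * (a j)^*) * (c i * (c i)^*)
     - (a i * (c i)^*) * (a j * (c j)^*)^* - (a j * (c j)^*) * (a i * (c i)^*)^*.
    move=> i j; rewrite /nsq !(rmorphB, rmorphM) /= !conjCK; ring.
  under [RHS]eq_bigr => i _ do under eq_bigr => j _ do rewrite T.
  rewrite !sum2B sum2D sum_prod sum_prod' sum_prod sum_prod'.
  rewrite /nsq rmorph_sum /=; ring.
have H2 : 0 <= 2 * ((\sum_i a i * (a i)^*) * (\sum_i c i * (c i)^*) - nsq (\sum_i a i * (c i)^*)).
  by rewrite E; apply: sumr_ge0 => i _; apply: sumr_ge0 => j _; exact: nsq_ge0.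
by rewrite pmulr_rge0 ?ltr0Sn // subr_ge0 in H2.
Qed.

Lemma CSb {C : numClosedFieldType} {n : nat} (a b : 'I_n -> C) :
  nsq (\sum_i a i * b i) <= (\sum_i nsq (a i)) * (\sum_i nsq (b i)).
Proof.
have := CS a (fun i => (b i)^*).
under eq_bigr => i _ do rewrite conjCK.
rewrite [X in _ <= _ * X -> _](_ : _ = \sum_i nsq (b i)) //.
by apply: eq_bigr => i _; rewrite conjCK mulrC.
Qed.

Lemma nsqD2 {C : numClosedFieldType} (s t : C) : nsq (s + t) <= 2 * (nsq s + nsq t).
Proof.
have E : 2 * (nsq s + nsq t) - nsq (s + t) = nsq (s - t).
  by rewrite /nsq !(rmorphD, rmorphB) /=; ring.
by rewrite -subr_ge0 E nsq_ge0.
Qed.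

Lemma orth_bound {C : numClosedFieldType} {n : nat} (x0 x1 y0 y1 : 'I_n -> C) :
  \sum_i x0 i * (x1 i)^* = 0 ->
  nsq (\sum_i (x0 i * y0 i + x1 i * y1 i)) <=
  2 * \sum_i \sum_j nsq (x0 i * y0 j + x1 i * y1 j).
Proof.
move=> h.
have h' : \sum_i x1 i * (x0 i)^* = 0.
  have -> : \sum_i x1 i * (x0 i)^* = (\sum_i x0 i * (x1 i)^*)^*.
    by rewrite rmorph_sum; apply: eq_bigr => i _; rewrite rmorphM /= conjCK mulrC.
  by rewrite h conjC0.
have ES : \sum_i \sum_j nsq (x0 i * y0 j + x1 i * y1 j) =
   (\sum_i nsq (x0 i)) * (\sum_j nsq (y0 j)) + (\sum_i nsq (x1 i)) * (\sum_j nsq (y1 j)).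
  have T : forall i j, nsq (x0 i * y0 j + x1 i * y1 j) =
    (nsq (x0 i) * nsq (y0 j) + nsq (x1 i) * nsq (y1 j)) +
    ((x0 i * (x1 i)^*) * (y0 j * (y1 j)^*) + (x1 i * (x0 i)^*) * (y1 j * (y0 j)^*)).
    by move=> i j; rewrite /nsq !(rmorphD, rmorphM) /=; ring.
  under eq_bigr => i _ do under eq_bigr => j _ do rewrite T.
  by rewrite !sum2D !sum_prod h h' !mul0r !addr0.
rewrite ES big_split /=.
apply: le_trans (nsqD2 _ _) _.
rewrite ler_wpM2l // lerD //; exact: CSb.
Qed.

Lemma rank2_bound {C : numClosedFieldType} {n : nat} (x0 x1 y0 y1 : 'I_n -> C) :
  nsq (\sum_i (x0 i * y0 i + x1 i * y1 i)) <=
  2 * \sum_i \sum_j nsq (x0 i * y0 j + x1 i * y1 j).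
Proof.
set a := \sum_i nsq (x0 i).
have [a0|an0] := eqVneq a 0.
  apply: orth_bound; apply: big1 => i _.
  have -> : x0 i = 0.
    apply/eqP; rewrite -mul_conjC_eq0; apply/eqP.
    by apply: (psumr_eq0P (fun i _ => nsq_ge0 (x0 i)) a0).
  by rewrite mul0r.
set g := \sum_i x1 i * (x0 i)^*.
pose x1' i := a * x1 i - g * x0 i.
pose y0' j := a * y0 j + g * y1 j.
have ar : a^* = a by apply: geC0_conj; apply: sumr_ge0 => i _; exact: nsq_ge0.
have hg : \sum_i x0 i * (x1 i)^* = g^*.
  rewrite /g rmorph_sum /=; apply: eq_bigr => i _.
  by rewrite rmorphM /= conjCK mulrC.
have ho : \sum_i x0 i * (x1' i)^* = 0.
  rewrite /x1'.
  under eq_bigr => i _ do rewrite rmorphB !rmorphM /= ar mulrBr.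
  rewrite sumrB.
  rewrite (_ : \sum_i x0 i * (a * (x1 i)^*) = a * g^*); last first.
    by rewrite -hg mulr_sumr; apply: eq_bigr => i _; ring.
  rewrite (_ : \sum_i x0 i * (g^* * (x0 i)^*) = g^* * a); last first.
    by rewrite /a mulr_sumr; apply: eq_bigr => i _; rewrite /nsq; ring.
  by rewrite mulrC subrr.
have := orth_bound x0 x1' y0' y1 ho.
have P : forall i j, x0 i * y0' j + x1' i * y1 j = a * (x0 i * y0 j + x1 i * y1 j).
  by move=> i j; rewrite /x1' /y0'; ring.
under eq_bigr => i _ do rewrite P.
under [X in _ <= 2 * X -> _]eq_bigr => i _ do under eq_bigr => j _ do rewrite P.
have nM : forall u v : C, nsq (u * v) = nsq u * nsq v.
  by move=> u v; rewrite /nsq rmorphM /=; ring.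
rewrite -mulr_sumr nM.
under [X in _ <= 2 * X -> _]eq_bigr => i _ do under eq_bigr => j _ do rewrite nM.
rewrite (_ : \sum_i \sum_j nsq a * nsq (x0 i * y0 j + x1 i * y1 j) =
   nsq a * \sum_i \sum_j nsq (x0 i * y0 j + x1 i * y1 j)); last first.
  rewrite mulr_sumr; apply: eq_bigr => i _; by rewrite mulr_sumr.
rewrite [X in _ <= X -> _]mulrCA ler_pM2l //.
by rewrite /nsq mul_conjC_gt0.
Qed.

Definition Lf {C : numClosedFieldType} {d : nat} (M : op C (('I_2 * 'I_d) * ('I_2 * 'I_d))%type) : C :=
  \sum_(s < 2) \sum_(s' < 2) \sum_(i < d) \sum_(j < d) M ((s, i), (s, j)) ((s', i), (s', j))
  - 2^-1 * \sum_(s < 2) \sum_(s' < 2) \sum_(i < d) \sum_(i' < d) M ((s, i), (s, i)) ((s', i'), (s', i')).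

Lemma swap1 {C : numClosedFieldType} (I K : finType) (F : I -> K -> C) :
  \sum_i \sum_k F i k = \sum_k \sum_i F i k.
Proof. exact: exchange_big. Qed.

Lemma swap4k {C : numClosedFieldType} (I1 I2 I3 I4 K : finType) (F : I1 -> I2 -> I3 -> I4 -> K -> C) :
  \sum_a \sum_b \sum_c \sum_e \sum_k F a b c e k = \sum_k \sum_a \sum_b \sum_c \sum_e F a b c e k.
Proof.
under eq_bigr => a _ do under eq_bigr => b _ do under eq_bigr => c _ do rewrite swap1.
under eq_bigr => a _ do under eq_bigr => b _ do rewrite swap1.
under eq_bigr => a _ do rewrite swap1.
by rewrite swap1.
Qed.

Lemma sum4_lin {C : numClosedFieldType} (I1 I2 I3 I4 : finType) n (c : 'I_n -> C)
  (G : 'I_n -> I1 -> I2 -> I3 -> I4 -> C) :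
  \sum_a \sum_b \sum_x \sum_e \sum_k c k * G k a b x e =
  \sum_k c k * \sum_a \sum_b \sum_x \sum_e G k a b x e.
Proof.
rewrite swap4k; apply: eq_bigr => k _.
rewrite mulr_sumr; apply: eq_bigr => a _.
rewrite mulr_sumr; apply: eq_bigr => b _.
rewrite mulr_sumr; apply: eq_bigr => x _.
by rewrite mulr_sumr.
Qed.

Lemma Lf_lin {C : numClosedFieldType} {d : nat} n (c : 'I_n -> C)
  (F : 'I_n -> op C (('I_2 * 'I_d) * ('I_2 * 'I_d))%type) M :
  (forall p q, M p q = \sum_k c k * F k p q) -> Lf M = \sum_k c k * Lf (F k).
Proof.
move=> HM; rewrite /Lf.
under eq_bigr => s _ do under eq_bigr => s' _ do under eq_bigr => i _ do
  under eq_bigr => j _ do rewrite HM.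
under [X in _ - _ * X]eq_bigr => s _ do under eq_bigr => s' _ do under eq_bigr => i _ do
  under eq_bigr => j _ do rewrite HM.
rewrite !sum4_lin mulr_sumr -sumrB; apply: eq_bigr => k _; ring.
Qed.



Definition Sd {C : numClosedFieldType} {n : nat} (X : op C ('I_n * 'I_n)%type) : C :=
  \sum_i \sum_i' X (i, i) (i', i').
Definition Trd {C : numClosedFieldType} {n : nat} (X : op C ('I_n * 'I_n)%type) : C :=
  \sum_i \sum_j X (i, j) (i, j).

Lemma sum22 {C : numClosedFieldType} (I1 I2 I3 I4 : finType) (f : I1 -> I2 -> C) (g : I3 -> I4 -> C) :
  \sum_a \sum_b \sum_x \sum_e f a b * g x e = (\sum_a \sum_b f a b) * (\sum_x \sum_e g x e).
Proof.
rewrite mulr_suml; apply: eq_bigr => a _.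
rewrite mulr_suml; apply: eq_bigr => b _.
rewrite mulr_sumr; apply: eq_bigr => x _.
by rewrite mulr_sumr.
Qed.

Definition reord {C : numClosedFieldType} {d : nat} (X2 : op C ('I_2 * 'I_2)%type)
  (Xd : op C ('I_d * 'I_d)%type) : op C (('I_2 * 'I_d) * ('I_2 * 'I_d))%type :=
  fun p q => kron _ _ _ X2 Xd ((p.1.1, p.2.1), (p.1.2, p.2.2)) ((q.1.1, q.2.1), (q.1.2, q.2.2)).

Lemma Lf_kron {C : numClosedFieldType} {d : nat} X2 Xd :
  Lf (@reord C d X2 Xd) = Sd X2 * (Trd Xd - 2^-1 * Sd Xd).
Proof. by rewrite /Lf /reord /kron /= !sum22 /Sd /Trd mulrBr mulrCA. Qed.


Lemma sum_delta_l' (C : numClosedFieldType) (I : finType) (F : I -> C) p :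
  \sum_j (p == j)%:R * F j = F p.
Proof.
rewrite (bigD1 p) //= eqxx mul1r big1 ?addr0 // => j; rewrite eq_sym => /negbTE ->.
by rewrite mul0r.
Qed.

Lemma invn_mul {C : numClosedFieldType} n : (0 < n)%N -> ((n%:R : C)^-1) *+ n = 1.
Proof.
move=> n0; have nz : (n%:R : C) != 0 by rewrite pnatr_eq0 -lt0n.
by rewrite -(mulr_natr (n%:R^-1)) mulVf.
Qed.

Lemma Sd_Pmax {C : numClosedFieldType} n : (0 < n)%N -> Sd (Pmax C n) = n%:R.
Proof.
move=> n0; rewrite /Sd /Pmax.
have t1 : (true%:R : C) = 1 by [].
under eq_bigr => i _ do under eq_bigr => j _ do rewrite !eqxx t1 !mul1r.
under eq_bigr => i _ do rewrite sumr_const card_ord invn_mul //.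
by rewrite sumr_const card_ord.
Qed.

Lemma sum_pair_delta {C : numClosedFieldType} n (c : C) (i : 'I_n) :
  \sum_j ((i, j).1 == (i, j).2)%:R * c = c.
Proof.
rewrite /= (bigD1 i) //= eqxx mul1r big1 ?addr0 // => j; rewrite eq_sym => /negbTE ->.
by rewrite mul0r.
Qed.

Lemma Trd_Pmax {C : numClosedFieldType} n : (0 < n)%N -> Trd (Pmax C n) = 1.
Proof.
move=> n0; rewrite /Trd /Pmax.
under eq_bigr => i _ do under eq_bigr => j _ do rewrite -natrM mulnb andbb.
under eq_bigr => i _ do rewrite sum_pair_delta.
by rewrite sumr_const card_ord invn_mul.
Qed.

Lemma sum2_div {C : numClosedFieldType} n (F : 'I_n -> 'I_n -> C) (D : C) :
  \sum_i \sum_j F i j / D = (\sum_i \sum_j F i j) / D.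
Proof. rewrite mulr_suml; apply: eq_bigr => i _; by rewrite mulr_suml. Qed.

Lemma sum_delta1 {C : numClosedFieldType} n (i : 'I_n) : \sum_j (i == j)%:R = 1 :> C.
Proof.
rewrite (bigD1 i) //= eqxx big1 ?addr0 // => j; rewrite eq_sym => /negbTE ->.
by [].
Qed.

Lemma Sd_Qtil {C : numClosedFieldType} n : (1 < n)%N -> Sd (Qtil C n) = 0.
Proof.
move=> n1; have n0 : (0 < n)%N by apply: ltnW.
rewrite /Sd /Qtil sum2_div.
under eq_bigr => i _ do rewrite sumrB.
rewrite sumrB.
have -> : \sum_i \sum_j Pmax C n (i, i) (j, j) = n%:R by rewrite -Sd_Pmax.
rewrite /idop.
under eq_bigr => i _ do under eq_bigr => j _ do rewrite xpair_eqE andbb.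
under eq_bigr => i _ do rewrite sum_delta1.
by rewrite sumr_const card_ord subrr mul0r.
Qed.

Lemma Trd_Qtil {C : numClosedFieldType} n : (1 < n)%N -> Trd (Qtil C n) = 1.
Proof.
move=> n1; have n0 : (0 < n)%N by apply: ltnW.
rewrite /Trd /Qtil sum2_div.
under eq_bigr => i _ do rewrite sumrB.
rewrite sumrB.
have -> : \sum_i \sum_j Pmax C n (i, j) (i, j) = 1 by rewrite -(@Trd_Pmax C n n0).
rewrite /idop.
under eq_bigr => i _ do under eq_bigr => j _ do rewrite eqxx.
have t1 : (true%:R : C) = 1 by [].
under eq_bigr => i _ do rewrite t1 sumr_const card_ord.
rewrite sumr_const card_ord -mulrnA -(mulr_natr 1) mul1r natrM expr2 divff //.
by rewrite subr_eq0 -natrM pnatr_eq1 muln_eq1 andbb neq_ltn n1 orbT.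
Qed.

Lemma swapA {C : numClosedFieldType} (I1 I2 I3 I4 : finType) (G : I1 -> I2 -> I3 -> I4 -> C) :
  \sum_a \sum_b \sum_x \sum_e G a b x e = \sum_x \sum_e \sum_a \sum_b G a b x e.
Proof.
under eq_bigr => a _ do rewrite swap1.
under eq_bigr => a _ do under eq_bigr => x _ do rewrite swap1.
rewrite swap1; apply: eq_bigr => x _.
by rewrite swap1.
Qed.

Lemma swapB {C : numClosedFieldType} (I1 I2 I3 I4 : finType) (G : I1 -> I2 -> I3 -> I4 -> C) :
  \sum_a \sum_b \sum_x \sum_e G a b x e = \sum_x \sum_a \sum_e \sum_b G a b x e.
Proof.
rewrite swapA; apply: eq_bigr => x _.
by rewrite swap1; apply: eq_bigr => e _; rewrite swap1.
Qed.

Lemma nsq_sum {C : numClosedFieldType} (I : finType) (f : I -> C) :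
  nsq (\sum_i f i) = \sum_i \sum_j f i * (f j)^*.
Proof.
rewrite /nsq rmorph_sum /= mulr_suml; apply: eq_bigr => i _; by rewrite mulr_sumr.
Qed.

Lemma ord2_sum {C : numClosedFieldType} (F : 'I_2 -> C) :
  \sum_(s < 2) F s = F ord0 + F (lift ord0 ord0).
Proof. by rewrite !big_ord_recl big_ord0 addr0. Qed.

Lemma Lf_rank1 {C : numClosedFieldType} {d : nat} (u w : 'I_2 * 'I_d -> C) :
  0 <= Lf (fun p q => (u p.1 * (u q.1)^*) * (w p.2 * (w q.2)^*)).
Proof.
rewrite /Lf !ord2_sum /=.
set o := lift ord0 ord0.
pose x0 i := u (ord0, i); pose x1 i := u (o, i).
pose y0 i := w (ord0, i); pose y1 i := w (o, i).
have nE : forall a b : C, nsq (a + b) = a * a^* + a * b^* + b * a^* + b * b^*.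
  by move=> a b; rewrite /nsq rmorphD /=; ring.
set S1 := (X in X - _).
set S2 := (X in _ - 2^-1 * X).
have E1 : S1 = \sum_i \sum_j nsq (x0 i * y0 j + x1 i * y1 j).
  rewrite /S1 -!sum2D; apply: eq_bigr => i _; apply: eq_bigr => j _.
  by rewrite nE /x0 /x1 /y0 /y1 !rmorphM /=; ring.
have E2 : S2 = nsq (\sum_i (x0 i * y0 i + x1 i * y1 i)).
  rewrite /S2 nsq_sum -!sum2D; apply: eq_bigr => i _; apply: eq_bigr => j _.
  by rewrite /x0 /x1 /y0 /y1 !(rmorphD, rmorphM) /=; ring.
rewrite E1 E2 subr_ge0 mulrC ler_pdivrMr ?ltr0Sn // mulrC.
exact: rank2_bound.
Qed.

Lemma Lf_kron_psd {C : numClosedFieldType} {d : nat} (A B : op C ('I_2 * 'I_d)%type) :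
  psd C _ A -> psd C _ B -> 0 <= Lf (kron _ _ _ A B).
Proof.
move=> /psd_decomp [na [u hu]] /psd_decomp [nb [w hw]].
rewrite (@Lf_lin C d na (fun _ => 1)
   (fun a => fun p q => (u a p.1 * (u a q.1)^*) * B p.2 q.2)); last first.
  move=> p q; rewrite /kron hu mulr_suml; apply: eq_bigr => a _; by rewrite mul1r.
apply: sumr_ge0 => a _; rewrite mul1r.
rewrite (@Lf_lin C d nb (fun _ => 1)
   (fun b => fun p q => (u a p.1 * (u a q.1)^*) * (w b p.2 * (w b q.2)^*))); last first.
  move=> p q; rewrite hw mulr_sumr; apply: eq_bigr => b _; by rewrite mul1r.
apply: sumr_ge0 => b _; rewrite mul1r; exact: Lf_rank1.
Qed.

Lemma Lf_rho {C : numClosedFieldType} (d : nat) (x y z : C) : (1 < d)%N ->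
  Lf (rho_AB C d x y z) = 2 * x + z * (2 - d%:R).
Proof.
move=> d1.
pose c (k : 'I_4) : C := nth 0 [:: 1; x; y; z] k.
pose F (k : 'I_4) : op C (('I_2 * 'I_d) * ('I_2 * 'I_d))%type :=
  nth (reord (Qtil C 2) (Qtil C d))
   [:: reord (Qtil C 2) (Qtil C d); reord (Pmax C 2) (Qtil C d);
       reord (Qtil C 2) (Pmax C d); reord (Pmax C 2) (Pmax C d)] k.
rewrite (@Lf_lin C d 4 c F); last first.
  move=> p q; rewrite !big_ord_recl big_ord0 /c /F /=.
  rewrite /rho_AB /rho_qq /reord mul1r addr0 !addrA //.
rewrite !big_ord_recl big_ord0 /c /F /= !Lf_kron.
rewrite (@Sd_Pmax C 2) // (@Sd_Qtil C 2) // Sd_Pmax ?(ltnW d1) // Sd_Qtil //.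
rewrite Trd_Pmax ?(ltnW d1) // Trd_Qtil //.
have h2 : (2 : C) * 2^-1 = 1 by rewrite divff // pnatr_eq0.
rewrite !(mulr0, mul0r, subr0, mulr1, mul1r, add0r, addr0) mulrBr mulr1 mulrA h2 mul1r.
by rewrite mulrC.
Qed.

Local Close Scope sesquilinear_scope.

Theorem mainTheorem4 (C : numClosedFieldType) (d : nat) (x y z : C) :
  (3 <= d)%N -> 0 <= x -> 0 <= y -> 0 <= z ->
  2 * x / (d%:R - 2) < z ->
  ~ separable C _ _ (rho_AB C d x y z).
Proof.
move=> d3 x0 y0 z0 hz [n [c [A [B [hk hrho]]]]].
have d1 : (1 < d)%N by apply: leq_trans d3.
have L1 := @Lf_lin C d n c (fun k => kron _ _ _ (A k) (B k)) _ hrho.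
have L2 : 0 <= Lf (rho_AB C d x y z).
  rewrite L1; apply: sumr_ge0 => k _.
  have [ck [pa pb]] := hk k.
  by apply: mulr_ge0 => //; exact: Lf_kron_psd.
have Dp : 0 < (d%:R - 2 : C).
  by rewrite -(natrB _ (ltnW d3)) ltr0n subn_gt0.
rewrite ltr_pdivrMr // in hz.
move: L2; rewrite Lf_rho // .
have -> : 2 * x + z * (2 - d%:R) = 2 * x - z * (d%:R - 2) by rewrite -mulrN opprB.
by rewrite subr_ge0 (lt_geF hz).
Qed.
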